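(* Fix an RWA-P instance and weights $\alpha,\beta>0$ (setting as in the context). For an integer $k$, let $f_\alpha^{\max}(k)=\max\{f_\alpha(x,y): (x,y)\text{ feasible},\ f_\beta(x)=k\}$ and $f_\alpha^{\min}(k)=\min\{f_\alpha(x,y): (x,y)\text{ feasible},\ f_\beta(x)=k\}$. Define $$\Omega^{>}=\max\left\{\frac{f_\alpha^{\max}(f_\beta(\hat x))-f_\alpha^{\min}(f_\beta(\tilde x))}{f_\beta(\hat x)-f_\beta(\tilde x)}:\ (\hat x,\hat y),(\tilde x,\tilde y)\text{ feasible},\ f_\beta(\hat x)>f_\beta(\tilde x)\right\},$$ and let $\Omega^{=}$ be the same maximum taken only over feasible pairs with $f_\beta(\hat x)=f_\beta(\tilde x)+1$. Then $\Omega^{>}=\Omega^{=}$. Consequently, if $\alpha,\beta>0$ satisfy $\beta/\alpha>\Omega^{=}$, then for every pair of feasible solutions $(\hat x,\hat y)$, $(\tilde x,\tilde y)$ with $f_\beta(\hat x)>f_\beta(\tilde x)$ we have $f(\hat x,\hat y)<f(\tilde x,\tilde y)$.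
   Context: An RWA-P instance consists of: a directed graph $G=(V,E)$ (parallel arcs allowed), whose arcs are called links; a finite set $\Lambda$ of wavelengths; a finite set $R$ of requests, each request $r$ having a source node $s^r$ and a distinct destination node $t^r$; and for each $r\in R$ finite sets $W^r$ (working lightpaths) and $P^r$ (protection lightpaths). Each lightpath $\ell$ of request $r$ is a directed path in $G$ from $s^r$ to $t^r$ together with a wavelength $\Lambda[\ell]\in\Lambda$; $E[\ell]$ denotes its set of links and its length is $B^r_\ell=|E[\ell]|\ge 1$. Conflict sets: $\mathcal C_1=\{(r,w,p): r\in R, w\in W^r,p\in P^r, E[w]\cap E[p]\ne\emptyset\}$; $\mathcal C_2=\{(r_1,r_2,w,p): r_1\ne r_2, w\in W^{r_1}, p\in P^{r_2}, \Lambda[w]=\Lambda[p], E[w]\cap E[p]\neq\emptyset\}$; $\mathcal C_3=\{(r_1,r_2,w_1,w_2): w_1\in W^{r_1}, w_2\in W^{r_2}, (r_1,w_1)\ne(r_2,w_2), \Lambda[w_1]=\Lambda[w_2], E[w_1]\cap E[w_2]\ne\emptyset\}$; $\mathcal C_4=\{(r_1,r_2,p_1,p_2): p_1\in P^{r_1}, p_2\in P^{r_2}, (r_1,p_1)\ne(r_2,p_2), \Lambda[p_1]=\Lambda[p_2], E[p_1]\cap E[p_2]\ne\emptyset\}$. A solution is a pair of binary vectors $x=(x^r_w)_{r\in R,w\in W^r}$, $y=(y^r_p)_{r\in R,p\in P^r}$; it is feasible if $\sum_{w\in W^r}x^r_w=\sum_{p\in P^r}y^r_p$ and $\sum_{w\in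 W^r}x^r_w\le 1$ for all $r$, $x^r_w+y^r_p\le1$ for $(r,w,p)\in\mathcal C_1$, $x^{r_1}_w+y^{r_2}_p\le1$ for $(r_1,r_2,w,p)\in\mathcal C_2$, $x^{r_1}_{w_1}+x^{r_2}_{w_2}\le1$ for $\mathcal C_3$, $y^{r_1}_{p_1}+y^{r_2}_{p_2}\le 1$ for $\mathcal C_4$. Define link usage $f_\alpha(x,y)=\sum_{r}\big(\sum_{w\in W^r}B^r_wx^r_w+\sum_{p\in P^r}B^r_py^r_p\big)$, number of granted requests $f_\beta(x)=\sum_r\sum_{w\in W^r}x^r_w$, and objective $f(x,y)=\alpha f_\alpha(x,y)-\beta f_\beta(x)$. *)

(* Defs.v *)
From HB Require Import structures.
From mathcomp Require Import all_boot all_order all_algebra.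
Set Implicit Arguments. Unset Strict Implicit. Unset Printing Implicit Defensive.
Import Order.TTheory GRing.Theory Num.Theory.

Definition is_dpath (N L : eqType) (tl hd : L -> N) (s t : N) (p : seq L) : bool :=
  match p with
  | [::] => false
  | e :: p' =>
      [&& tl e == s, path (fun a b => hd a == tl b) e p',
          hd (last e p') == t & uniq (s :: map hd p)]
  end.

(* An RWA-P instance.  Working lightpaths (all requests together) are the
   elements of [wlp]; [wreq w] is the request r with w \in W^r.  Same for
   protection lightpaths [plp]. *)
Record rwap := RWAP {
  node : finType;
  link : finType;
  ltail : link -> node;
  lhead : link -> node;
  wavelength : finType;
  req : finType;
  src : req -> node;
  dst : req -> node;
  src_neq_dst : forall r, src r != dst r;
  wlp : finType;
  wreq : wlp -> req;
  wpath : wlp -> seq link;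
  wlam : wlp -> wavelength;
  wpath_ok : forall w, is_dpath ltail lhead (src (wreq w)) (dst (wreq w)) (wpath w);
  (* W^r is a set: no lightpath listed twice for the same request *)
  wlp_inj : forall w1 w2, wreq w1 = wreq w2 -> wpath w1 = wpath w2 ->
              wlam w1 = wlam w2 -> w1 = w2;
  plp : finType;
  preq : plp -> req;
  ppath : plp -> seq link;
  plam : plp -> wavelength;
  ppath_ok : forall p, is_dpath ltail lhead (src (preq p)) (dst (preq p)) (ppath p);
  plp_inj : forall p1 p2, preq p1 = preq p2 -> ppath p1 = ppath p2 ->
              plam p1 = plam p2 -> p1 = p2
}.

Section Defs.
Variable I : rwap.

Definition Ew (w : wlp I) : {set link I} := [set e in wpath w].
Definition Ep (p : plp I) : {set link I} := [set e in ppath p].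
Definition Bw (w : wlp I) : nat := #|Ew w|.
Definition Bp (p : plp I) : nat := #|Ep p|.

Definition feasible (x : wlp I -> bool) (y : plp I -> bool) : Prop :=
  [/\ (forall r : req I,
         #|[set w | (wreq w == r) && x w]| = #|[set p | (preq p == r) && y p]|
         /\ #|[set w | (wreq w == r) && x w]| <= 1)%N,
      (forall w p, wreq w = preq p -> Ew w :&: Ep p != set0 -> ~~ (x w && y p)),
      (forall w p, wreq w != preq p -> wlam w = plam p -> Ew w :&: Ep p != set0 ->
         ~~ (x w && y p)),
      (forall w1 w2, w1 != w2 -> wlam w1 = wlam w2 -> Ew w1 :&: Ew w2 != set0 ->
         ~~ (x w1 && x w2)) &
      (forall p1 p2, p1 != p2 -> plam p1 = plam p2 -> Ep p1 :&: Ep p2 != set0 ->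
         ~~ (y p1 && y p2))].

Definition f_alpha (x : wlp I -> bool) (y : plp I -> bool) : nat :=
  (\sum_(w | x w) Bw w + \sum_(p | y p) Bp p)%N.

Definition f_beta (x : wlp I -> bool) : nat := #|[set w | x w]|.

Definition f_obj (R : numDomainType) (alpha beta : R) x y : R :=
  (alpha * (f_alpha x y)%:R - beta * (f_beta x)%:R)%R.

Definition is_falpha_max (k m : nat) : Prop :=
  (exists x y, [/\ feasible x y, f_beta x = k & f_alpha x y = m]) /\
  (forall x y, feasible x y -> f_beta x = k -> (f_alpha x y <= m)%N).

Definition is_falpha_min (k m : nat) : Prop :=
  (exists x y, [/\ feasible x y, f_beta x = k & f_alpha x y = m]) /\
  (forall x y, feasible x y -> f_beta x = k -> (m <= f_alpha x y)%N).

(* the set of quotients over which Omega is a maximum; [cond kh kt]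
   restricts the pairs of levels (kh = f_beta(xhat), kt = f_beta(xtilde)) *)
Definition Omega_set (R : realFieldType) (cond : nat -> nat -> bool) (v : R) : Prop :=
  exists xh yh xt yt, [/\ feasible xh yh, feasible xt yt,
     cond (f_beta xh) (f_beta xt) &
     exists M m, [/\ is_falpha_max (f_beta xh) M, is_falpha_min (f_beta xt) m &
       v = ((M%:R - m%:R) / ((f_beta xh)%:R - (f_beta xt)%:R))%R]].

Definition Omega_gt_set (R : realFieldType) := @Omega_set R (fun kh kt => kt < kh)%N.
Definition Omega_eq_set (R : realFieldType) := @Omega_set R (fun kh kt => kh == kt.+1)%N.

End Defs.
Arguments Omega_set I R cond v : clear implicits.
Arguments Omega_gt_set I R v : clear implicits.
Arguments Omega_eq_set I R v : clear implicits.

Definition is_max (R : realFieldType) (S : R -> Prop) (v : R) : Prop :=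
  S v /\ (forall u, S u -> (u <= v)%R).

(* Main.v *)
Require Import Defs.
From HB Require Import structures.
From mathcomp Require Import all_boot all_order all_algebra.
From mathcomp Require Import zify ring lra.
From Stdlib Require Import Classical.
Import Order.TTheory GRing.Theory Num.Theory.
Set Implicit Arguments.
Local Open Scope ring_scope.

Definition Pl (I : rwap) (k : nat) : Prop :=
  exists (x : wlp I -> bool) (y : plp I -> bool), feasible x y /\ f_beta x = k.

Lemma drop_one (I : rwap) (x : wlp I -> bool) (y : plp I -> bool) :
  feasible x y -> (0 < f_beta x)%N -> Pl I (f_beta x).-1.
Proof.
move=> H; rewrite /f_beta card_gt0 => /set0Pn [w]; rewrite inE => xw.
case: H => [Hc H1 H2 H3 H4].
set r := wreq w.
exists (fun w' => x w' && (wreq w' != r)), (fun p => y p && (preq p != r)).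
split.
  split.
  - move=> r'; case: (eqVneq r' r) => [->|ne].
      have -> : [set w' | (wreq w' == r) && (x w' && (wreq w' != r))] = set0.
        by apply/setP => w'; rewrite !inE andbCA andbN andbF.
      have -> : [set p | (preq p == r) && (y p && (preq p != r))] = set0.
        by apply/setP => p; rewrite !inE andbCA andbN andbF.
      by rewrite !cards0.
    have -> : [set w' | (wreq w' == r') && (x w' && (wreq w' != r))]
            = [set w' | (wreq w' == r') && x w'].
      by apply/setP => w'; rewrite !inE; case: eqVneq => //= ->; rewrite ne andbT.
    have -> : [set p | (preq p == r') && (y p && (preq p != r))]
            = [set p | (preq p == r') && y p].
      by apply/setP => p; rewrite !inE; case: eqVneq => //= ->; rewrite ne andbT.
    exact: Hc.
  - move=> w' p E N; move: (H1 w' p E N); apply: contra.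
    by case/andP => /andP[-> _] /andP[-> _].
  - move=> w' p E L N; move: (H2 w' p E L N); apply: contra.
    by case/andP => /andP[-> _] /andP[-> _].
  - move=> w1 w2 E L N; move: (H3 w1 w2 E L N); apply: contra.
    by case/andP => /andP[-> _] /andP[-> _].
  - move=> w1 w2 E L N; move: (H4 w1 w2 E L N); apply: contra.
    by case/andP => /andP[-> _] /andP[-> _].
rewrite /f_beta.
have := cardsID [set w' | wreq w' == r] [set w' | x w'].
have -> : [set w' | x w'] :\: [set w' | wreq w' == r]
        = [set w' | x w' && (wreq w' != r)].
  by apply/setP => w'; rewrite !inE andbC.
have -> : [set w' | x w'] :&: [set w' | wreq w' == r]
        = [set w' | (wreq w' == r) && x w'].
  by apply/setP => w'; rewrite !inE andbC.
have [_ le1] := Hc r.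
have : (0 < #|[set w' | (wreq w' == r) && x w']|)%N.
  by rewrite card_gt0; apply/set0Pn; exists w; rewrite inE eqxx xw.
lia.
Qed.

Lemma P_le (I : rwap) k j : (j <= k)%N -> Pl I k -> Pl I j.
Proof.
elim: k => [|k IH]; first by rewrite leqn0 => /eqP ->.
rewrite leq_eqVlt => /orP [/eqP -> //|lt] [x [y [F B]]].
apply: IH => //.
by have := drop_one F; rewrite B /=; apply.
Qed.

Lemma ex_max_nat (P : nat -> Prop) B : (exists n, P n) -> (forall n, P n -> (n <= B)%N) ->
  exists m, P m /\ forall n, P n -> (n <= m)%N.
Proof.
elim: B => [|B IH] [n Pn] Hb.
  exists n; split => // n' Pn'; have := Hb _ Pn'; have := Hb _ Pn; lia.
case: (classic (P B.+1)) => [PB|NPB].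
  by exists B.+1; split.
apply: IH; first by exists n.
move=> n' Pn'; have := Hb _ Pn'; rewrite leq_eqVlt => /orP [/eqP E|//].
by subst n'.
Qed.

Lemma ex_min_nat (P : nat -> Prop) n : P n ->
  exists m, P m /\ forall n, P n -> (m <= n)%N.
Proof.
elim/ltn_ind: n => n IH Pn.
case: (classic (exists k, (k < n)%N /\ P k)) => [[k [lt Pk]]|no].
  exact: (IH k).
exists n; split => // n' Pn'; rewrite leqNgt; apply/negP => lt; apply: no.
by exists n'.
Qed.

Lemma fa_bound (I : rwap) (x : wlp I -> bool) (y : plp I -> bool) :
  (f_alpha x y <= \sum_(w : wlp I) Bw w + \sum_(p : plp I) Bp p)%N.
Proof.
rewrite /f_alpha leq_add //; rewrite big_mkcond /= leq_sum // => i _.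
  by case: (x i).
by case: (y i).
Qed.

Lemma max_ex (I : rwap) k : Pl I k -> exists M, is_falpha_max I k M.
Proof.
move=> [x [y [F B]]].
have HH : exists m,
  (exists (x : wlp I -> bool) (y : plp I -> bool), [/\ feasible x y, f_beta x = k & f_alpha x y = m]) /\
  forall n, (exists (x : wlp I -> bool) (y : plp I -> bool), [/\ feasible x y, f_beta x = k & f_alpha x y = n]) -> (n <= m)%N.
  apply: (@ex_max_nat (fun n => exists (x : wlp I -> bool) (y : plp I -> bool), [/\ feasible x y, f_beta x = k & f_alpha x y = n]) ( (\sum_(w : wlp I) Bw w + \sum_(p : plp I) Bp p)%N)).
    by exists (f_alpha x y), x, y.
  by move=> n [x1 [y1 [_ _ <-]]]; apply: fa_bound.
case: HH => M [[x' [y' [F' B' A']]] HM].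
exists M; split; first by exists x', y'.
move=> x1 y1 F1 B1; apply: HM; by exists x1, y1.
Qed.

Lemma min_ex (I : rwap) k : Pl I k -> exists m, is_falpha_min I k m.
Proof.
move=> [x [y [F B]]].
have [M [[x' [y' [F' B' A']]] HM]] := @ex_min_nat
  ( fun n => exists (x : wlp I -> bool) (y : plp I -> bool), [/\ feasible x y, f_beta x = k & f_alpha x y = n])
  _ (ex_intro _ x (ex_intro _ y (And3 F B erefl))).
exists M; split; first by exists x', y'.
move=> x1 y1 F1 B1; apply: HM; by exists x1, y1.
Qed.

Lemma min_le_max (I : rwap) k M m : is_falpha_max I k M -> is_falpha_min I k m -> (m <= M)%N.
Proof.
move=> [[x [y [F B A]]] HM] [_ Hm].
by apply: leq_trans (Hm x y F B) _; apply: HM.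
Qed.

Lemma eq_mem (I : rwap) (R : realFieldType) j M m :
  is_falpha_max I j.+1 M -> is_falpha_min I j m -> Omega_eq_set I R (M%:R - m%:R).
Proof.
move=> HM Hm.
have [[xh [yh [Fh Bh _]]] _] := HM.
have [[xt [yt [Ft Bt _]]] _] := Hm.
exists xh, yh, xt, yt; split => //; first by rewrite Bh Bt.
exists M, m; rewrite Bh Bt; split => //.
have -> : (j.+1)%:R - j%:R = 1 :> R by rewrite -addn1 natrD; ring.
by rewrite divr1.
Qed.

Lemma eq_sub_gt (I : rwap) (R : realFieldType) u :
  Omega_eq_set I R u -> Omega_gt_set I R u.
Proof.
case=> xh [yh [xt [yt [F1 F2 C H]]]]; exists xh, yh, xt, yt; split => //.
by move/eqP: C => ->.
Qed.

Lemma gt_dec (I : rwap) (R : realFieldType) u : Omega_gt_set I R u ->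
  exists kt d Mh mt, [/\ is_falpha_max I (kt + d.+1) Mh, is_falpha_min I kt mt &
     u = (Mh%:R - mt%:R) / (d.+1)%:R].
Proof.
case=> xh [yh [xt [yt [F1 F2 C [M [m [HM Hm E]]]]]]].
have Ek : f_beta xh = (f_beta xt + (f_beta xh - f_beta xt).-1.+1)%N by lia.
exists (f_beta xt), (f_beta xh - f_beta xt).-1, M, m; split => //.
  by rewrite -Ek.
rewrite E; congr (_ / _); rewrite [in LHS]Ek natrD; ring.
Qed.

Lemma tele_le (I : rwap) (R : realFieldType) (c : R) :
  (forall u, Omega_eq_set I R u -> u <= c) ->
  forall d kt Mh mt, is_falpha_max I (kt + d.+1) Mh -> is_falpha_min I kt mt ->
  Mh%:R - mt%:R <= (d.+1)%:R * c.
Proof.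
move=> Hc; elim=> [|d IH] kt Mh mt HM Hm.
  rewrite mul1r; apply: Hc; apply: (@eq_mem I R kt) => //; by rewrite -addn1.
have Ph : Pl I (kt + d.+2).
  by have [[x [y [F B _]]] _] := HM; exists x, y.
have P1 : Pl I kt.+1 by apply: P_le Ph; lia.
have [M1 H1] := max_ex P1; have [m1 h1] := min_ex P1.
have i1 : Mh%:R - m1%:R <= (d.+1)%:R * c.
  by apply: (IH kt.+1) => //; rewrite addSn -addnS.
have i2 : M1%:R - mt%:R <= c :> R by apply: Hc; apply: (@eq_mem I R kt).
have i3 : m1%:R <= M1%:R :> R by rewrite ler_nat; apply: min_le_max H1 h1.
rewrite -addn1 natrD mulrDl mul1r; lra.
Qed.

Lemma tele_lt (I : rwap) (R : realFieldType) (c : R) :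
  (forall u, Omega_eq_set I R u -> u < c) ->
  forall d kt Mh mt, is_falpha_max I (kt + d.+1) Mh -> is_falpha_min I kt mt ->
  Mh%:R - mt%:R < (d.+1)%:R * c.
Proof.
move=> Hc; elim=> [|d IH] kt Mh mt HM Hm.
  rewrite mul1r; apply: Hc; apply: (@eq_mem I R kt) => //; by rewrite -addn1.
have Ph : Pl I (kt + d.+2).
  by have [[x [y [F B _]]] _] := HM; exists x, y.
have P1 : Pl I kt.+1 by apply: P_le Ph; lia.
have [M1 H1] := max_ex P1; have [m1 h1] := min_ex P1.
have i1 : Mh%:R - m1%:R < (d.+1)%:R * c.
  by apply: (IH kt.+1) => //; rewrite addSn -addnS.
have i2 : M1%:R - mt%:R < c :> R by apply: Hc; apply: (@eq_mem I R kt).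
have i3 : m1%:R <= M1%:R :> R by rewrite ler_nat; apply: min_le_max H1 h1.
rewrite -addn1 natrD mulrDl mul1r; lra.
Qed.

Unset Implicit Arguments.
Local Close Scope ring_scope.
Theorem proposition1 (R : realFieldType) (I : rwap) :
  (forall v : R, is_max (Omega_gt_set I R) v <-> is_max (Omega_eq_set I R) v) /\
  (forall (Omega_eq alpha beta : R),
     is_max (Omega_eq_set I R) Omega_eq ->
     (0 < alpha)%R -> (0 < beta)%R -> (Omega_eq < beta / alpha)%R ->
     forall (xh : wlp I -> bool) (yh : plp I -> bool)
            (xt : wlp I -> bool) (yt : plp I -> bool),
       feasible xh yh -> feasible xt yt -> (f_beta xt < f_beta xh)%N ->
       (f_obj alpha beta xh yh < f_obj alpha beta xt yt)%R).
Proof.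
split.
  move=> v; split.
    move=> [Gv Hv]; split; last by move=> u /eq_sub_gt; apply: Hv.
    apply: NNPP => NE.
    have Hlt : forall u, Omega_eq_set I R u -> (u < v)%R.
      move=> u Eu; rewrite lt_neqAle (Hv u (eq_sub_gt Eu)) andbT.
      by apply/negP => /eqP E; apply: NE; rewrite -E.
    have [kt [d [Mh [mt [HM Hm E]]]]] := gt_dec Gv.
    have := @tele_lt I R v Hlt _ _ _ _ HM Hm.
    by rewrite mulrC -ltr_pdivrMr ?ltr0Sn // -E ltxx.
  move=> [Ev Hv]; split; first exact: eq_sub_gt.
  move=> u /gt_dec [kt [d [Mh [mt [HM Hm ->]]]]].
  rewrite ler_pdivrMr ?ltr0Sn // mulrC; exact: (@tele_le I R v Hv _ _ _ _ HM Hm).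
move=> Om al be [Eo Ho] al0 be0 lt xh yh xt yt Fh Ft ltb.
have Ph : Pl I (f_beta xh) by exists xh, yh.
have Pt : Pl I (f_beta xt) by exists xt, yt.
have [Mh HM] := max_ex Ph; have [mt Hm] := min_ex Pt.
have a1 : (f_alpha xh yh <= Mh)%N by case: HM => _; apply.
have a2 : (mt <= f_alpha xt yt)%N by case: Hm => _; apply.
have Ek : f_beta xh = (f_beta xt + (f_beta xh - f_beta xt).-1.+1)%N by lia.
set d := (f_beta xh - f_beta xt).-1 in Ek.
have T := @tele_le I R Om Ho d (f_beta xt) Mh mt.
rewrite -Ek in T; have {}T := T HM Hm.
move: lt; rewrite ltr_pdivlMr // => lt.
rewrite /f_obj Ek natrD.
have b1 : ((f_alpha xh yh)%:R <= Mh%:R :> R)%R by rewrite ler_nat.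
have b2 : (mt%:R <= (f_alpha xt yt)%:R :> R)%R by rewrite ler_nat.
have D0 : (0 < (d.+1)%:R :> R)%R by rewrite ltr0Sn.
set A := ((f_alpha xh yh)%:R)%R in b1 *; set B := ((f_alpha xt yt)%:R)%R in b2 *.
set D := ((d.+1)%:R)%R in D0 T *.
have c1 : (al * (A - B) <= al * (D * Om))%R by rewrite ler_pM2l //; lra.
have c2 : (D * (Om * al) < D * be)%R by rewrite ltr_pM2l.
nra.
Qed.
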